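(* Let $\mathcal{F}=(W,R)$ be a finite transitive frame and let $X_\mathcal{F}$ and $f:X_\mathcal{F}\to W$ be constructed as described in the context (for any admissible choice of the spaces $X_C$). Then $f$ is a $d$-morphism from $X_\mathcal{F}$ onto $\mathcal{F}$.
   Context: For a topological space $X$ and $Y\subseteq X$: $\mathrm{cl}_X Y$ is the closure; a point $x$ is a limit point of $Y$ if every set $O-\{x\}$ with $O$ an open neighbourhood of $x$ meets $Y$; $\mathrm{d}_X Y$ (the derived set) is the set of limit points of $Y$. $Y$ is dense in $X$ if $\mathrm{cl}_XY=X$. A subset $S$ is crowded in $X$ if $S\subseteq \mathrm{d}_X S$ (i.e. $S$ has no isolated points as a subspace). A partition of $X$ into cells is dense (resp. crowded) if every cell is dense in $X$ (resp. crowded). Frames: $\mathcal{F}=(W,R)$ with $R$ transitive. $R^*$ is the reflexive closure of $R$. A cluster is an equivalence class of the relation $\{(x,y): x=y \text{ or } xRyRx\}$; the cluster of $x$ is $C_x$. A cluster $C_x$ is degenerate if $x$ is irreflexive (then $C_x=\{x\}$), otherwise non-degenerate. $R$ lifts to clusters by $C_xRC_y$ iff $xRy$. Write $CR^{\uparrow}C'$ if $CRC'$ but not $C'RC$. The Alexandrov space $W_R$ is $W$ with topology whose open sets are the $R$-up-sets (sets $O$ with $w\in O, wRv\Rightarrow v\in O$). A $d$-morphism from a space $X$ to a transitive frame $\mathcal{F}=(W,R)$ is a function $f:X\to W$ such that (i) $f$ is continuous and open as a map $X\to W_R$; (ii) if $w$ is $R$-reflexive then $f^{-1}\{w\}$ is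 crowded in $X$; (iii) if $w$ is $R$-irreflexive then $f^{-1}\{w\}\cap \mathrm{d}_X f^{-1}\{w\}=\emptyset$. Construction of $X_\mathcal{F}$: let $\mathcal{F}=(W,R)$ be finite transitive with set of clusters $\mathscr{C}$. For each $C\in\mathscr{C}$ choose a space $X_C$ with a partition $\{X_w:w\in C\}$: if $C=\{w\}$ is degenerate, $X_C=X_w=\{w\}$ (one-point space); if $C=\{w_1,\dots,w_k\}$ is non-degenerate, $X_C$ is a space with a crowded dense $k$-partition whose cells are labelled $X_{w_1},\dots,X_{w_k}$. The $X_C$ are pairwise disjoint. Let $X_\mathcal{F}=\bigcup_{C\in\mathscr{C}}X_C$, where $O\subseteq X_\mathcal{F}$ is open iff for every $C\in\mathscr{C}$, $O\cap X_C$ is open in $X_C$, and if $O\cap X_C\neq\emptyset$ then $X_{C'}\subseteq O$ for every $C'$ with $CR^\uparrow C'$. Define $f:X_\mathcal{F}\to W$ by $f(x)=w$ iff $x\in X_w$. *)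

(* Defs.v *)
From HB Require Import structures.
From mathcomp Require Import all_boot all_order all_algebra.
From mathcomp Require Import all_classical topology.

Set Implicit Arguments.
Unset Strict Implicit.
Unset Printing Implicit Defensive.

Local Open Scope classical_set_scope.

Section Clusters.
Variables (W : finType) (R : rel W).

Definition cluster_of (w : W) : {set W} :=
  [set v | (v == w) || (R w v && R v w)].

Definition clusters := {C : {set W} | [exists w, C == cluster_of w]}.

Definition clR (C C' : clusters) : bool :=
  [exists x in val C, exists y in val C', R x y].

Definition clRup (C C' : clusters) : bool := clR C C' && ~~ clR C' C.

Definition degenerate (C : clusters) : Prop :=
  exists w, val C = cluster_of w /\ ~~ R w w.

End Clusters.

Section XF.
Variables (W : finType) (R : rel W) (X : clusters R -> topologicalType).

Definition XF_type := {C : clusters R & X C}.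

HB.instance Definition _ := Choice.on XF_type.

Definition XF_open (O : set XF_type) : Prop :=
  forall C : clusters R,
    open (fun x : X C => O (existT _ C x)) /\
    ((exists x : X C, O (existT _ C x)) ->
       forall C' : clusters R, clRup C C' -> forall x' : X C', O (existT _ C' x')).

Lemma XF_openT : XF_open setT.
Proof. move=> C; split; first exact: openT. by move=> _ C2 _ x2. Qed.

Lemma XF_openI : setI_closed XF_open.
Proof.
move=> A B oA oB C; have [oAC uA] := oA C; have [oBC uB] := oB C; split.
  exact: (@openI _ (fun x : X C => A (existT _ C x)) (fun x => B (existT _ C x))).
move=> [x [Ax Bx]] C' CC' x'; split.
  by apply: uA => //; exists x.
by apply: uB => //; exists x.
Qed.

Lemma XF_op_bigU (I : Type) (f : I -> set XF_type) :
  (forall i, XF_open (f i)) -> XF_open (\bigcup_i f i).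
Proof.
move=> hf C; split.
  have -> : (fun x : X C => (\bigcup_i f i) (existT _ C x)) =
            \bigcup_i (fun x : X C => f i (existT _ C x)).
    by rewrite funeqE => x; apply: propext; split; move=> [i _ H]; exists i.
  by apply: bigcup_open => i _; have [] := hf i C.
move=> [x [i _ fx]] C' CC' x'; exists i => //.
have [_ u] := hf i C; apply: u => //; by exists x.
Qed.

HB.instance Definition _ := isOpenTopological.Build XF_type
  XF_openT XF_openI XF_op_bigU.

End XF.

(** Up-sets of R, i.e. the open sets of the Alexandrov space W_R. *)
Definition Rupset (W : Type) (R : rel W) (U : set W) : Prop :=
  forall w v, U w -> R w v -> U v.

(** f : T -> W is a d-morphism from the space T to the transitive frame (W,R):
    (i) f is continuous and open as a map T -> W_R;
    (ii) fibres of reflexive points are crowded (S ⊆ d S);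
    (iii) fibres of irreflexive points satisfy S ∩ d S = ∅. *)
Definition d_morphism (T : topologicalType) (W : Type) (R : rel W)
    (f : T -> W) : Prop :=
  [/\ (forall U : set W, Rupset R U -> open (f @^-1` U)),
      (forall O : set T, open O -> Rupset R (f @` O)),
      (forall w : W, R w w ->
         f @^-1` [set w] `<=` limit_point (f @^-1` [set w]))
    & (forall w : W, ~~ R w w ->
         f @^-1` [set w] `&` limit_point (f @^-1` [set w]) = set0)].

(* Main.v *)
Require Import Defs.
From HB Require Import structures.
From mathcomp Require Import all_boot all_order all_algebra.
From mathcomp Require Import all_classical topology.
From Stdlib Require Import Eqdep_dec.
Local Open Scope classical_set_scope.

Section H.
Context {W : finType} {R : rel W} (Rtrans : transitive R).

Let tr {a b c} : R a b -> R b c -> R a c. Proof. exact: Rtrans. Qed.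

Lemma chain {a b c d} : (a = b \/ R a b) -> R b c -> (c = d \/ R c d) -> R a d.
Proof.
case=> [->|ab] bc [<-|cd] //.
- exact: tr bc cd.
- exact: tr ab bc.
- exact: tr ab (tr bc cd).
Qed.

Lemma in_cl {x v} : v \in cluster_of R x -> v = x \/ (R x v /\ R v x).
Proof. rewrite inE => /orP[/eqP->|/andP[]]; by [left|right]. Qed.

Lemma cl_eq {x v} : v \in cluster_of R x -> cluster_of R v = cluster_of R x.
Proof.
move=> /in_cl [->//|[xv vx]]; apply/setP => u; rewrite !inE.
apply/orP/orP.
- case=> [/eqP->|/andP[vu uv]]; right; first by rewrite xv vx.
  by rewrite (tr xv vu) (tr uv vx).
- case=> [/eqP->|/andP[xu ux]]; right; first by rewrite vx xv.
  by rewrite (tr vx xu) (tr ux xv).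
Qed.

Lemma valC {C : clusters R} {w} : w \in val C -> val C = cluster_of R w.
Proof.
case: C => C /= /existsP[x /eqP ->] wx; by rewrite (cl_eq wx).
Qed.

Lemma self_cl w : w \in cluster_of R w.
Proof. by rewrite inE eqxx. Qed.

Lemma cl_uniq {C C' : clusters R} {w} : w \in val C -> w \in val C' -> C = C'.
Proof. by move=> h h'; apply: val_inj; rewrite (valC h) (valC h'). Qed.

Lemma clof_subproof w : [exists v, cluster_of R w == cluster_of R v].
Proof. by apply/existsP; exists w. Qed.
Definition clof w : clusters R := exist _ (cluster_of R w) (clof_subproof w).

Lemma clofP w : w \in val (clof w).
Proof. exact: self_cl. Qed.

Lemma nondeg_refl {C : clusters R} {w} : ~ degenerate C -> w \in val C -> R w w.
Proof.
move=> nd wC; apply/negPn/negP => nw; apply: nd; exists w; split=> //; exact: valC.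
Qed.

Lemma deg_only {C : clusters R} {w} : degenerate C -> w \in val C ->
  ~~ R w w /\ forall v, v \in val C -> v = w.
Proof.
move=> [w0 [e nw0]]; have key : forall v, v \in val C -> v = w0.
  move=> v; rewrite e => /in_cl [//|[a b]].
  by move: nw0; rewrite (tr a b).
by move=> /key ->; split=> // v /key.
Qed.

Lemma irr_deg {C : clusters R} {w} : w \in val C -> ~~ R w w -> degenerate C.
Proof. move=> wC nw; exists w; split=> //; exact: valC. Qed.

Lemma clR_rel {C C' : clusters R} {w v} : clR C C' -> w \in val C -> v \in val C' -> R w v.
Proof.
move=> /existsP[x /andP[xC /existsP[y /andP[yC' xy]]]] wC vC'.
apply: (chain _ xy).
  move: wC; rewrite (valC xC) => /in_cl [->|[]]; by [left|right].
move: vC'; rewrite (valC yC') => /in_cl [->|[]]; by [left|right].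
Qed.

Lemma clRup_of {C C' : clusters R} {w v} : C != C' -> w \in val C -> v \in val C' ->
  R w v -> clRup C C'.
Proof.
move=> ne wC vC' wv; apply/andP; split.
  by apply/existsP; exists w; rewrite wC /=; apply/existsP; exists v; rewrite vC'.
apply/negP => /(clR_rel) h; have vw := h v w vC' wC.
have vC : v \in val C by rewrite (valC wC) inE wv vw orbT.
by move: ne; rewrite (cl_uniq vC vC') eqxx.
Qed.

End H.

Theorem lemma3 (W : finType) (R : rel W) (Rtrans : transitive R)
  (X : clusters R -> topologicalType)
  (lab : forall C : clusters R, X C -> W)
  (lab_in : forall (C : clusters R) (x : X C), lab C x \in val C)
  (deg_one_point : forall C : clusters R, degenerate C ->
      (exists x : X C, True) /\ (forall x y : X C, x = y))
  (nondeg_partition : forall C : clusters R, ~ degenerate C ->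
      forall w, w \in val C ->
        let cell := [set x : X C | lab C x = w] in
        [/\ cell !=set0, closure cell = setT & cell `<=` limit_point cell]) :
  let f := fun p : XF_type X => lab (projT1 p) (projT2 p) in
  d_morphism R f /\ (forall w : W, exists p, f p = w).
Proof.
move=> f.
have pt : forall (C : clusters R) v, v \in val C -> exists x : X C, lab C x = v.
  move=> C v vC; case: (pselect (degenerate C)) => [d|nd].
    have [[x _] _] := deg_one_point C d; exists x.
    have [_ h] := deg_only Rtrans d vC; exact: h (lab_in C x).
  by have [[x /= cx] _ _] := nondeg_partition C nd v vC; exists x.
split; last first.
  move=> w; have [x hx] := pt _ _ (clofP w); by exists (existT _ (clof w) x).
split.
- move=> U hU; change (XF_open (f @^-1` U)) => C; split.
    set S := (fun x : X C => _).
    case: (pselect (exists x, S x)) => [[x Sx]|nS]; last first.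
      have -> : S = set0 by rewrite funeqE => y; apply/propext; split=> // Sy; apply: nS; exists y.
      exact: open0.
    have -> : S = setT; last exact: openT.
    rewrite funeqE => y; apply/propext; split=> // _.
    case: (pselect (degenerate C)) => [d|nd].
      by have [_ h] := deg_one_point C d; rewrite (h y x).
    rewrite /S /f /=; move: (lab_in C y); rewrite (valC Rtrans (lab_in C x)).
    move=> /in_cl [->//|[xy _]]; exact: hU Sx xy.
  move=> [x Ux] C' /andP[cr _] x'.
  exact: hU Ux (clR_rel Rtrans cr (lab_in C x) (lab_in C' x')).
- move=> O oO0 w v [[C x] Op <-] wv.
  have oO : XF_open O := oO0.
  case: (eqVneq (clof v) C) => [e|ne].
    have vC : v \in val C by rewrite -e; exact: clofP.
    have nd : ~ degenerate C.
      move=> d; have [nw h] := deg_only Rtrans d (lab_in C x).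
      by move: nw; rewrite -{2}(h _ vC) wv.
    have [_ cl _] := nondeg_partition C nd v vC.
    have [oC _] := oO C.
    have : closure [set y : X C | lab C y = v] x by rewrite cl.
    move=> /(_ (fun y => O (existT _ C y))) [].
      by apply: open_nbhs_nbhs; split.
    by move=> y [/= ly Oy]; exists (existT _ C y).
  have up := clRup_of Rtrans (ltac:(by rewrite eq_sym) : C != clof v) (lab_in C x) (clofP v) wv.
  have [x' hx'] := pt _ _ (clofP v).
  exists (existT _ (clof v) x') => //.
  by have [_ u] := oO C; apply: u => //; exists x.
- move=> w ww [C x] /= fx U; rewrite nbhsE => -[B [oB0 Bp] BU].
  have oB : XF_open B := oB0.
  have nd : ~ degenerate C.
    move=> d; have [nw _] := deg_only Rtrans d (lab_in C x).
    by move: nw; rewrite /f /= in fx; rewrite fx ww.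
  have [oC _] := oB C.
  have wC : w \in val C by rewrite -fx; exact: lab_in.
  have [_ _ lim] := nondeg_partition C nd w wC.
  have [|y [yx ly By]] := lim x fx (fun y => B (existT _ C y)).
    by apply: open_nbhs_nbhs; split.
  exists (existT _ C y); split => //; last exact: BU.
  apply/eqP => e; move/eqP: yx; apply.
  exact: (inj_pair2_eq_dec _ (fun a b => eq_comparable a b) _ _ _ _ e).
- move=> w nw; apply/seteqP; split=> // -[C x] [/= fx lp].
  have wC : w \in val C by rewrite -fx; exact: lab_in.
  have d := irr_deg Rtrans wC nw.
  have [|[C' y] [yx /= fy _]] := lp setT; first exact: filterT.
  have wC' : w \in val C' by rewrite -fy; exact: lab_in.
  have e : C' = C by apply: (cl_uniq Rtrans wC' wC).
  subst C'; have [_ h] := deg_one_point C d.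
  by move: yx; rewrite (h y x) eqxx.
Qed.
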